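(* Let $\mathcal{G}_{24}$ be the $(24,12,8)$ extended binary Golay code and $\mathcal{G}_{12}$ the $(12,6,6)$ extended ternary Golay code. Then $\rho(\mathcal{G}_{24}) \le 34$ and $\rho(\mathcal{G}_{12}) \le 22$.
   Context: A parity-check matrix for a linear code $\mathcal{C}$ is any matrix (possibly with linearly dependent rows) whose rows span $\mathcal{C}^\perp$. For a parity-check matrix $H$, the stopping distance $s(H)$ is the largest integer such that for every set of $s(H)-1$ or fewer columns of $H$, the projection of $H$ onto those columns contains at least one row of Hamming weight exactly one (exactly one nonzero entry). The stopping redundancy $\rho(\mathcal{C})$ is the smallest number of rows of a parity-check matrix $H$ for $\mathcal{C}$ with $s(H)$ equal to the minimum Hamming distance of $\mathcal{C}$. *)

(* Defs.v *)
(* Linear codes over a finite field F are given by a generator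
   matrix G : 'M[F]_(k, n); the code is the row space of G. *)
From mathcomp Require Import all_boot all_order all_algebra.
Set Implicit Arguments. Unset Strict Implicit. Unset Printing Implicit Defensive.
Import GRing.Theory.
Local Open Scope ring_scope.

Section Codes.
Variable F : fieldType.

Definition hwt n (v : 'rV[F]_n) : nat := #|[set j | v 0 j != 0]|.

Definition is_min_dist k n (G : 'M[F]_(k, n)) (d : nat) : Prop :=
  (exists c : 'rV[F]_n, [/\ (c <= G)%MS, c != 0 & hwt c = d]) /\
  (forall c : 'rV[F]_n, (c <= G)%MS -> c != 0 -> (d <= hwt c)%N).

(* H is a parity-check matrix for the code with generator matrix G: the rows
   of H span the dual code C^perp = { u | u *m G^T = 0 } = row space of kermx G^T. *)
Definition is_parity_check k n r (G : 'M[F]_(k, n)) (H : 'M[F]_(r, n)) : Prop :=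
  (H == kermx G^T)%MS.

Definition has_wt1_row r n (H : 'M[F]_(r, n)) (S : {set 'I_n}) : bool :=
  [exists i : 'I_r, #|[set j in S | H i j != 0]| == 1%N].

Definition stop_prop r n (H : 'M[F]_(r, n)) (s : nat) : Prop :=
  forall S : {set 'I_n}, S != set0 -> (#|S| < s)%N -> has_wt1_row H S.

(* s(H) = s : s is the largest integer with the property above
   (the property is downward closed in s). *)
Definition stopping_distance r n (H : 'M[F]_(r, n)) (s : nat) : Prop :=
  stop_prop H s /\ ~ stop_prop H s.+1.

Definition stopping_redundancy_le k n (G : 'M[F]_(k, n)) (m : nat) : Prop :=
  exists (d r : nat) (H : 'M[F]_(r, n)),
    [/\ (r <= m)%N, is_parity_check G H, is_min_dist G d & stopping_distance H d].

End Codes.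

Definition mx_of_table (F : fieldType) k n (t : seq (seq nat)) : 'M[F]_(k, n) :=
  \matrix_(i < k, j < n) ((nth 0%N (nth [::] t i) j)%:R : F).

(* Extended binary Golay code (24,12,8): generator [I_12 | B], with B built from
   the quadratic residues mod 11. *)
Definition golay24_table : seq (seq nat) :=
[:: [:: 1; 0; 0; 0; 0; 0; 0; 0; 0; 0; 0; 0; 0; 1; 1; 1; 1; 1; 1; 1; 1; 1; 1; 1];
[:: 0; 1; 0; 0; 0; 0; 0; 0; 0; 0; 0; 0; 1; 1; 1; 0; 1; 1; 1; 0; 0; 0; 1; 0];
[:: 0; 0; 1; 0; 0; 0; 0; 0; 0; 0; 0; 0; 1; 0; 1; 1; 0; 1; 1; 1; 0; 0; 0; 1];
[:: 0; 0; 0; 1; 0; 0; 0; 0; 0; 0; 0; 0; 1; 1; 0; 1; 1; 0; 1; 1; 1; 0; 0; 0];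
[:: 0; 0; 0; 0; 1; 0; 0; 0; 0; 0; 0; 0; 1; 0; 1; 0; 1; 1; 0; 1; 1; 1; 0; 0];
[:: 0; 0; 0; 0; 0; 1; 0; 0; 0; 0; 0; 0; 1; 0; 0; 1; 0; 1; 1; 0; 1; 1; 1; 0];
[:: 0; 0; 0; 0; 0; 0; 1; 0; 0; 0; 0; 0; 1; 0; 0; 0; 1; 0; 1; 1; 0; 1; 1; 1];
[:: 0; 0; 0; 0; 0; 0; 0; 1; 0; 0; 0; 0; 1; 1; 0; 0; 0; 1; 0; 1; 1; 0; 1; 1];
[:: 0; 0; 0; 0; 0; 0; 0; 0; 1; 0; 0; 0; 1; 1; 1; 0; 0; 0; 1; 0; 1; 1; 0; 1];
[:: 0; 0; 0; 0; 0; 0; 0; 0; 0; 1; 0; 0; 1; 1; 1; 1; 0; 0; 0; 1; 0; 1; 1; 0];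
[:: 0; 0; 0; 0; 0; 0; 0; 0; 0; 0; 1; 0; 1; 0; 1; 1; 1; 0; 0; 0; 1; 0; 1; 1];
[:: 0; 0; 0; 0; 0; 0; 0; 0; 0; 0; 0; 1; 1; 1; 0; 1; 1; 1; 0; 0; 0; 1; 0; 1]].

Definition golay24_gen : 'M['F_2]_(12, 24) := mx_of_table _ _ _ golay24_table.

Definition golay12_table : seq (seq nat) :=
[:: [:: 1; 0; 0; 0; 0; 0; 0; 1; 1; 1; 1; 1];
    [:: 0; 1; 0; 0; 0; 0; 1; 0; 1; 2; 2; 1];
    [:: 0; 0; 1; 0; 0; 0; 1; 1; 0; 1; 2; 2];
    [:: 0; 0; 0; 1; 0; 0; 1; 2; 1; 0; 1; 2];
    [:: 0; 0; 0; 0; 1; 0; 1; 2; 2; 1; 0; 1];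
    [:: 0; 0; 0; 0; 0; 1; 1; 1; 2; 2; 1; 0]].

Definition golay12_gen : 'M['F_3]_(6, 12) := mx_of_table _ _ _ golay12_table.

(* Main.v *)
Require Import Defs.
From mathcomp Require Import all_boot all_order all_algebra.
Set Implicit Arguments. Unset Strict Implicit. Unset Printing Implicit Defensive.
Import GRing.Theory.
Local Open Scope ring_scope.

Definition tab (t : seq (seq nat)) i j := nth 0%N (nth [::] t i) j.


Definition g24_H : seq (seq nat) :=
[::
[:: 0; 0; 0; 1; 0; 0; 0; 0; 0; 1; 1; 0; 1; 0; 0; 1; 0; 0; 1; 0; 0; 1; 0; 1];
[:: 0; 0; 1; 0; 0; 0; 1; 0; 0; 0; 1; 1; 0; 1; 0; 1; 1; 0; 0; 0; 1; 0; 0; 0];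
[:: 1; 1; 0; 1; 1; 0; 0; 0; 1; 0; 0; 0; 0; 0; 0; 0; 0; 1; 0; 1; 0; 1; 0; 0];
[:: 1; 0; 0; 1; 1; 0; 0; 0; 0; 1; 1; 0; 0; 1; 0; 0; 0; 0; 0; 0; 0; 1; 1; 0];
[:: 0; 1; 0; 0; 0; 0; 0; 1; 1; 0; 0; 1; 0; 0; 0; 1; 0; 1; 0; 1; 0; 0; 0; 1];
[:: 0; 0; 1; 0; 0; 1; 1; 0; 0; 0; 0; 0; 1; 0; 1; 0; 1; 0; 1; 0; 1; 0; 0; 0];
[:: 1; 1; 0; 0; 0; 1; 1; 1; 0; 1; 1; 0; 0; 0; 0; 0; 0; 0; 0; 0; 0; 0; 1; 0];
[:: 0; 0; 1; 1; 0; 0; 0; 0; 1; 0; 0; 1; 0; 1; 0; 1; 0; 0; 1; 0; 0; 0; 0; 1];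
[:: 0; 0; 0; 1; 1; 1; 0; 1; 0; 1; 0; 1; 0; 0; 0; 0; 1; 0; 0; 0; 0; 0; 1; 0];
[:: 0; 1; 0; 0; 0; 0; 0; 0; 0; 0; 1; 0; 0; 1; 0; 1; 0; 1; 1; 0; 1; 0; 0; 1];
[:: 0; 0; 0; 0; 0; 1; 0; 1; 1; 1; 0; 0; 0; 1; 0; 0; 0; 0; 0; 0; 1; 1; 1; 0];
[:: 0; 1; 1; 0; 1; 0; 0; 0; 0; 0; 1; 1; 1; 0; 0; 1; 0; 0; 0; 0; 0; 0; 0; 1];
[:: 0; 0; 0; 0; 1; 0; 0; 0; 0; 0; 0; 0; 1; 0; 1; 0; 1; 1; 0; 1; 1; 1; 0; 0];
[:: 0; 1; 1; 1; 1; 0; 1; 0; 0; 0; 0; 0; 1; 0; 1; 0; 0; 1; 0; 0; 0; 0; 0; 0];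
[:: 1; 0; 0; 1; 0; 0; 1; 0; 0; 0; 0; 0; 0; 0; 1; 0; 1; 1; 1; 1; 0; 0; 0; 0];
[:: 0; 0; 1; 0; 0; 1; 0; 1; 0; 1; 0; 0; 0; 0; 0; 1; 0; 1; 0; 1; 0; 0; 1; 0];
[:: 1; 0; 0; 1; 0; 0; 0; 0; 0; 0; 1; 1; 1; 1; 0; 0; 0; 0; 0; 0; 1; 0; 0; 1];
[:: 0; 1; 0; 0; 1; 0; 1; 0; 0; 0; 1; 0; 0; 1; 1; 1; 0; 0; 0; 0; 0; 0; 1; 0];
[:: 0; 0; 0; 0; 0; 0; 0; 1; 1; 1; 0; 1; 0; 0; 0; 0; 1; 0; 1; 0; 0; 1; 0; 1];
[:: 1; 0; 0; 0; 0; 1; 0; 0; 0; 0; 0; 1; 0; 0; 1; 1; 0; 1; 0; 1; 0; 1; 0; 0];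
[:: 0; 0; 1; 1; 1; 0; 0; 0; 0; 1; 1; 0; 1; 0; 0; 0; 1; 0; 0; 0; 1; 0; 0; 0];
[:: 1; 1; 1; 0; 0; 0; 0; 1; 1; 0; 0; 0; 0; 0; 0; 0; 0; 0; 0; 1; 1; 0; 1; 0];
[:: 0; 0; 0; 1; 0; 1; 1; 0; 0; 0; 0; 0; 1; 1; 0; 0; 0; 1; 1; 0; 0; 0; 0; 1];
[:: 1; 0; 0; 0; 1; 0; 0; 0; 0; 1; 0; 0; 0; 0; 1; 0; 0; 0; 1; 1; 0; 1; 0; 1];
[:: 0; 0; 0; 1; 0; 0; 1; 1; 0; 0; 0; 0; 1; 0; 0; 1; 0; 1; 0; 1; 0; 1; 0; 0];
[:: 0; 1; 0; 0; 0; 1; 0; 0; 1; 0; 1; 0; 0; 0; 1; 0; 0; 0; 1; 0; 1; 0; 1; 0];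
[:: 0; 0; 0; 0; 1; 0; 0; 0; 0; 0; 1; 1; 1; 1; 0; 0; 1; 0; 0; 1; 0; 0; 1; 0];
[:: 1; 0; 0; 0; 1; 1; 1; 1; 0; 0; 0; 0; 0; 0; 0; 0; 1; 0; 1; 0; 0; 0; 0; 1];
[:: 1; 0; 1; 0; 0; 1; 1; 0; 0; 0; 0; 1; 0; 0; 0; 0; 1; 0; 0; 1; 0; 0; 1; 0];
[:: 0; 1; 0; 0; 0; 1; 0; 0; 0; 0; 0; 0; 0; 1; 1; 1; 1; 0; 0; 0; 1; 1; 0; 0];
[:: 0; 0; 0; 0; 0; 1; 1; 1; 1; 0; 1; 0; 1; 0; 0; 0; 0; 0; 1; 0; 0; 1; 0; 0];
[:: 1; 0; 0; 0; 0; 0; 0; 0; 1; 1; 0; 1; 1; 0; 1; 1; 0; 0; 0; 0; 0; 0; 0; 1];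
[:: 0; 1; 0; 1; 0; 0; 1; 0; 0; 0; 0; 1; 0; 1; 1; 0; 0; 0; 1; 0; 1; 0; 0; 0];
[:: 1; 0; 0; 0; 0; 0; 1; 1; 0; 0; 0; 0; 0; 0; 1; 1; 0; 0; 0; 1; 0; 0; 1; 1]].

Definition g24_P : seq (seq nat) :=
[::
[:: 1; 1; 0; 0; 0; 1; 1; 1; 0; 0; 1; 0; 0; 0; 0; 0; 0; 0; 0; 0; 0; 0; 0; 0];
[:: 0; 0; 0; 1; 0; 1; 1; 1; 1; 1; 0; 0; 0; 0; 0; 0; 0; 0; 0; 0; 0; 0; 0; 0];
[:: 0; 1; 0; 1; 0; 1; 1; 0; 1; 0; 1; 0; 0; 0; 0; 0; 0; 0; 0; 0; 0; 0; 0; 0];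
[:: 0; 0; 1; 0; 1; 0; 1; 1; 1; 0; 0; 0; 0; 0; 0; 0; 0; 0; 0; 0; 0; 0; 0; 0];
[:: 1; 1; 1; 0; 1; 1; 0; 1; 1; 1; 1; 0; 0; 0; 0; 0; 0; 0; 0; 0; 0; 0; 0; 0];
[:: 1; 1; 1; 0; 1; 0; 0; 0; 1; 1; 1; 0; 0; 0; 0; 0; 0; 0; 0; 0; 0; 0; 0; 0];
[:: 1; 1; 1; 1; 1; 1; 0; 1; 0; 0; 1; 0; 0; 0; 0; 0; 0; 0; 0; 0; 0; 0; 0; 0];
[:: 1; 0; 0; 0; 1; 1; 1; 1; 0; 0; 0; 1; 0; 0; 0; 0; 0; 0; 0; 0; 0; 0; 0; 0];
[:: 0; 0; 1; 0; 0; 1; 0; 1; 0; 0; 0; 1; 0; 0; 0; 0; 0; 0; 0; 0; 0; 0; 0; 0];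
[:: 0; 1; 0; 1; 0; 1; 1; 0; 0; 1; 0; 1; 0; 0; 0; 0; 0; 0; 0; 0; 0; 0; 0; 0];
[:: 0; 0; 1; 1; 0; 1; 0; 0; 1; 1; 0; 1; 0; 0; 0; 0; 0; 0; 0; 0; 0; 0; 0; 0];
[:: 0; 1; 0; 1; 0; 0; 0; 0; 0; 0; 1; 1; 0; 0; 0; 0; 0; 0; 0; 0; 0; 0; 0; 0]].

Definition g12_H : seq (seq nat) :=
[::
[:: 1; 1; 0; 2; 0; 1; 1; 0; 0; 2; 0; 0];
[:: 0; 0; 1; 0; 2; 0; 0; 2; 1; 0; 2; 1];
[:: 0; 1; 1; 2; 2; 0; 0; 0; 1; 2; 0; 0];
[:: 0; 1; 2; 1; 0; 2; 0; 0; 0; 2; 0; 1];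
[:: 1; 0; 0; 0; 2; 0; 2; 2; 2; 0; 1; 0];
[:: 0; 1; 2; 2; 0; 0; 2; 0; 0; 1; 2; 0];
[:: 1; 0; 0; 0; 0; 1; 1; 2; 0; 0; 2; 1];
[:: 0; 0; 0; 1; 1; 1; 0; 2; 2; 0; 2; 0];
[:: 1; 1; 0; 0; 2; 0; 0; 2; 0; 2; 0; 1];
[:: 1; 0; 0; 0; 0; 2; 2; 0; 2; 2; 0; 1];
[:: 1; 1; 2; 0; 0; 2; 2; 2; 0; 0; 0; 0];
[:: 1; 1; 2; 2; 1; 0; 0; 0; 0; 0; 0; 2];
[:: 0; 1; 0; 0; 2; 0; 0; 1; 2; 1; 2; 0];
[:: 0; 0; 0; 0; 1; 1; 2; 0; 1; 0; 1; 1];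
[:: 0; 1; 1; 2; 0; 0; 1; 2; 0; 0; 0; 1];
[:: 1; 0; 2; 2; 0; 2; 0; 0; 1; 1; 0; 0];
[:: 1; 0; 0; 0; 2; 2; 1; 1; 0; 1; 0; 0];
[:: 1; 0; 1; 2; 0; 0; 0; 0; 0; 2; 2; 1];
[:: 1; 2; 0; 0; 0; 2; 1; 0; 1; 0; 1; 0];
[:: 1; 0; 2; 1; 0; 0; 0; 2; 2; 0; 0; 1];
[:: 1; 0; 0; 2; 0; 0; 2; 2; 0; 1; 0; 2];
[:: 1; 0; 1; 0; 0; 1; 2; 0; 0; 1; 1; 0]].

Definition g12_P : seq (seq nat) :=
[::
[:: 0; 2; 0; 2; 0; 1; 0; 0; 0; 0; 0; 0];
[:: 1; 2; 2; 0; 1; 0; 0; 0; 0; 0; 0; 0];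
[:: 1; 0; 1; 2; 1; 1; 0; 0; 0; 0; 0; 0];
[:: 0; 2; 0; 2; 0; 0; 0; 0; 0; 0; 0; 0];
[:: 1; 1; 0; 1; 0; 2; 0; 0; 0; 0; 0; 0];
[:: 2; 0; 2; 0; 2; 1; 0; 0; 0; 0; 0; 0]].

Lemma card_iota n (P : pred 'I_n.+1) :
  #|[set j | P j]| = count (fun j => P (inord j)) (iota 0 n.+1).
Proof.
rewrite -sum1dep_card -sum1_count.
rewrite (eq_bigl (fun j : 'I_n.+1 => P (inord (val j)))); last by move=> j; rewrite inord_val.
by rewrite -(big_mkord (fun j => P (inord j)) (fun _ => 1%N)) /index_iota subn0.
Qed.

Lemma sum_iota n (f : nat -> nat) : (\sum_(j < n) f j)%N = sumn [seq f j | j <- iota 0 n].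
Proof. by rewrite sumnE big_map -(big_mkord xpredT) /index_iota subn0. Qed.

Section Fp.
Variable p : nat.
Hypothesis pr : prime p.

Lemma natF_eq (a b : nat) : ((a%:R : 'F_p) = b%:R) <-> (a %% p = b %% p)%N.
Proof.
split => [h|h]; first by rewrite -!(val_Fp_nat pr) h.
by apply: val_inj; rewrite /= !(val_Fp_nat pr).
Qed.

Lemma natF_eq0 (a : nat) : ((a%:R : 'F_p) == 0) = (a %% p == 0)%N.
Proof.
have z : (0 : 'F_p) = 0%:R by [].
rewrite z; apply/eqP/eqP => [/natF_eq|h]; first by rewrite mod0n.
by apply/natF_eq; rewrite h mod0n.
Qed.

Lemma Fp_val (x : 'F_p) : x = (nat_of_ord x)%:R.
Proof.
apply: val_inj; rewrite /= (val_Fp_nat pr) modn_small //.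
have := ltn_ord x; move: (nat_of_ord x) => k; by rewrite (Fp_cast pr).
Qed.

Definition mxt m n t : 'M['F_p]_(m, n) := mx_of_table _ m n t.

Lemma mxtE m n t i j : mxt m n t i j = (tab t i j)%:R.
Proof. by rewrite /mxt /mx_of_table mxE. Qed.


Lemma mem_iota_ord m (i : 'I_m) : (nat_of_ord i \in iota 0 m).
Proof. by rewrite mem_iota add0n ltn_ord. Qed.

Definition dotn n (a b : seq nat) := sumn [seq (nth 0 a j * nth 0 b j)%N | j <- iota 0 n].
Definition chk_mul m n l A B C :=
  all (fun i => all (fun k => (dotn n (nth [::] A i) (nth [::] B k) %% p == tab C i k %% p)%N)
     (iota 0 l)) (iota 0 m).

Lemma mul_table m n l A B C : chk_mul m n l A B C ->
  mxt m n A *m (mxt l n B)^T = mxt m l C.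
Proof.
move=> /allP h; apply/matrixP => i k; rewrite !mxE.
under eq_bigr => j _ do rewrite !mxE -natrM.
rewrite -natr_sum; apply/natF_eq.
have /allP := h i (mem_iota_ord i).
move=> /(_ k (mem_iota_ord k)) /eqP <-.
by rewrite (sum_iota n (fun j => nth 0 (nth [::] A i) j * nth 0 (nth [::] B k) j)%N).
Qed.

Definition id_table m := mkseq (fun i => mkseq (fun k => nat_of_bool (i == k)) m) m.

Lemma id_tableE m : mxt m m (id_table m) = 1%:M.
Proof.
apply/matrixP => i k; rewrite mxtE !mxE /tab /id_table !nth_mkseq //.
Qed.

Lemma zero_tableE m n : mxt m n [::] = 0.
Proof. by apply/matrixP => i k; rewrite mxtE !mxE /tab !nth_nil. Qed.

Lemma rank_inv m n (A : 'M['F_p]_(m, n)) P : A *m P = 1%:M -> (m <= \rank A)%N.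
Proof. by move=> h; rewrite -{1}(mxrank1 'F_p m) -h mxrankM_maxl. Qed.

Lemma take_sub m r n t : (m <= r)%N -> (mxt m n (take m t) <= mxt r n t)%MS.
Proof.
move=> le; apply/row_subP => i.
have -> : row i (mxt m n (take m t)) = row (widen_ord le i) (mxt r n t).
  by apply/matrixP => a j; rewrite !mxE nth_take.
exact: row_sub.
Qed.

Lemma parity_ok k n r m (G : 'M['F_p]_(k, n)) (H : 'M_(r, n)) (H0 : 'M_(m, n)) Q P :
  H *m G^T = 0 -> G *m Q = 1%:M -> H0 *m P = 1%:M -> (H0 <= H)%MS -> (m + k = n)%N ->
  is_parity_check G H.
Proof.
move=> HG GQ HP sub mk.
have sK : (H <= kermx G^T)%MS by rewrite sub_kermx HG.
rewrite /is_parity_check -(mxrank_leqif_eq sK).2 eqn_leq (mxrank_leqif_eq sK).1 /=.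
rewrite mxrank_ker mxrank_tr.
have rG : \rank G = k by apply/eqP; rewrite eqn_leq rank_leq_row (rank_inv GQ).
rewrite rG -{1}mk addnK.
exact: leq_trans (rank_inv HP) (mxrankS sub).
Qed.


Definition cw k t (l : seq nat) j := (sumn [seq nth 0 l i * tab t i j | i <- iota 0 k] %% p)%N.
Fixpoint allvec (k : nat) (P : seq nat -> bool) : bool :=
  if k is k'.+1 then all (fun x => allvec k' (fun l => P (x :: l))) (iota 0 p) else P [::].

Lemma allvecP k P : allvec k P -> forall l, size l = k -> all (fun x => x < p)%N l -> P l.
Proof.
elim: k P => [|k IH] P /= h [|x l] //= [sl] /andP [xp lp].
have /allP /(_ x) := h; rewrite mem_iota add0n xp => /(_ isT) hx.
exact: (IH _ hx l sl lp).
Qed.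

Definition minwt_chk k n t d := allvec k (fun l => all (fun x => x == 0)%N l ||
   (d <= count (fun j => cw k t l j != 0)%N (iota 0 n))%N).

Lemma hwt_iota n (v : 'rV['F_p]_n.+1) : hwt v = count (fun j => v 0 (inord j) != 0) (iota 0 n.+1).
Proof. by rewrite /hwt card_iota. Qed.

Lemma minwt_ok k n t d (i0 : 'I_k.+1) : (0 < d)%N ->
  count (fun j => tab t i0 j %% p != 0)%N (iota 0 n.+1) = d ->
  minwt_chk k.+1 n.+1 t d -> is_min_dist (mxt k.+1 n.+1 t) d.
Proof.
move=> d0 cnt hchk; split.
  have hw : hwt (row i0 (mxt k.+1 n.+1 t)) = d.
    rewrite hwt_iota -cnt; apply: eq_in_count => j; rewrite mem_iota add0n => /= jn.
    by rewrite !mxE natF_eq0 inordK.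
  exists (row i0 (mxt k.+1 n.+1 t)); split => //; first exact: row_sub.
  apply/eqP => c0; move: hw; rewrite c0 hwt_iota.
  under eq_count => j do rewrite mxE eqxx.
  by rewrite count_pred0 => d0'; move: d0; rewrite -d0'.
move=> c /submxP [u ->] cne.
set l := mkseq (fun i => nat_of_ord (u 0 (inord i))) k.+1.
have ul : forall i : 'I_k.+1, u 0 i = (nth 0%N l i)%:R.
  by move=> i; rewrite nth_mkseq // inord_val -Fp_val.
have lp : all (fun x => x < p)%N l.
  apply/allP => x /mapP [i _ ->]; have := ltn_ord (u 0 (inord i)).
  move: (nat_of_ord _) => z; by rewrite (Fp_cast pr).
have := allvecP hchk (size_mkseq _ _) lp.
case/orP => [z | ge].
  move/eqP: cne; case; apply/matrixP => a j; rewrite !mxE (ord1 a).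
  apply: big1 => i _; rewrite ul.
  have /allP /(_ (nth 0%N l i)) := z; rewrite mem_nth ?size_mkseq // => /(_ isT) /eqP ->.
  by rewrite mul0r.
apply: (leq_trans ge); rewrite hwt_iota leq_eqVlt; apply/orP; left; apply/eqP.
apply: eq_in_count => j; rewrite mem_iota add0n => /= jn.
rewrite !mxE.
under eq_bigr => i _ do rewrite ul mxE -natrM.
rewrite -natr_sum natF_eq0 /cw.
by rewrite (sum_iota k.+1 (fun i => nth 0 l i * tab t i (inord j))%N) inordK.
Qed.


Definition addc (cnt : seq nat) (c : seq bool) := [seq (x.1 + nat_of_bool x.2)%N | x <- zip cnt c].

Fixpoint chk (cols : seq (seq bool)) (cnt : seq nat) (budget : nat) (ne : bool) : bool :=
  match cols with
  | [::] => ~~ ne || has (fun x => x == 1)%N cnt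
  | c :: cols' => chk cols' cnt budget ne &&
      (if budget is b'.+1 then chk cols' (addc cnt c) b' true else true)
  end.

Lemma chk_ok cols cnt budget ne : all (fun c => size c == size cnt) cols ->
  chk cols cnt budget ne -> forall bs, size bs = size cols -> (count id bs <= budget)%N ->
  ne || has id bs ->
  exists2 i, (i < size cnt)%N & (nth 0 cnt i + count id [seq x.1 && nth false x.2 i | x <- zip bs cols] = 1)%N.
Proof.
elim: cols cnt budget ne => [|c cols IH] cnt budget ne /=.
  move=> _ h [|//] _ _; rewrite orbF => hne; move: h; rewrite hne /= => /(has_nthP 0%N) [i hi /eqP e].
  by exists i; rewrite // addn0.
move=> /andP [/eqP sc sall] /andP [h1 h2] [//|b bs] /= [sb].
case: b => /=.
  case: budget h1 h2 => [|b'] // _ h2; rewrite add1n ltnS => cb _.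
  have sa : size (addc cnt c) = size cnt by rewrite size_map size_zip sc minnn.
  have [|i hi e] := IH (addc cnt c) b' true _ h2 bs sb cb isT; first by rewrite sa.
  exists i; first by rewrite -sa.
  move: e; rewrite /addc (nth_map (0%N, false)) ?size_zip ?sc ?minnn -?sa //.
  by rewrite nth_zip //= addnA.
rewrite add0n => cb hne.
have [i hi e] := IH cnt budget ne sall h1 bs sb cb hne.
by exists i.
Qed.


Lemma zip_map2 (A B C : Type) (f : A -> B) (g : A -> C) s :
  zip (map f s) (map g s) = map (fun x => (f x, g x)) s.
Proof. by elim: s => //= x s ->. Qed.

Definition mkcols n t := mkseq (fun j => [seq (nth 0 row j %% p != 0)%N | row <- t]) n.
Definition stop_chk n r t b := [&& size t == r, all (fun c => size c == r) (mkcols n t)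
   & chk (mkcols n t) (nseq r 0%N) b false].

Lemma stop_ok n r t b : stop_chk n.+1 r.+1 t b -> stop_prop (mxt r.+1 n.+1 t) b.+1.
Proof.
move=> /and3P [/eqP st sc hc] S Sne Slt.
set bs := mkseq (fun j => inord j \in S) n.+1.
have cS : count id bs = #|S|.
  have -> : S = [set j | j \in S] by apply/setP => j; rewrite inE.
  by rewrite card_iota /bs /mkseq count_map.
have := chk_ok (cnt := nseq r.+1 0%N) _ hc (bs := bs).
case.
- by rewrite size_nseq.
- by rewrite /bs /mkcols !size_mkseq.
- by rewrite cS -ltnS.
- by rewrite orFb has_count cS card_gt0.
move=> i; rewrite size_nseq => hi e.
apply/existsP; exists (inord i); apply/eqP.
rewrite card_iota -e nth_nseq hi add0n /bs /mkcols /mkseq zip_map2 !count_map.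
apply: eq_in_count => j; rewrite mem_iota add0n => /= jn.
rewrite mxtE natF_eq0 /tab (nth_map [::]) ?st // !inordK //.
Qed.

Definition nostop_chk n r t g i0 := all (fun i =>
  count (fun j => (tab g i0 j %% p != 0) && (tab t i j %% p != 0))%N (iota 0 n) != 1)%N (iota 0 r).

Lemma nostop_ok n r k t g (i0 : 'I_k) b :
  count (fun j => tab g i0 j %% p != 0)%N (iota 0 n.+1) = b.+1 ->
  nostop_chk n.+1 r.+1 t g i0 -> ~ stop_prop (mxt r.+1 n.+1 t) b.+2.
Proof.
move=> cnt hc hs.
set S := [set j : 'I_n.+1 | tab g i0 j %% p != 0]%N.
have cS : #|S| = b.+1.
  rewrite card_iota -cnt; apply: eq_in_count => j; rewrite mem_iota add0n => /= jn.
  by rewrite inordK.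
have := hs S; rewrite -card_gt0 cS ltnSn => /(_ isT isT) /existsP [i /eqP].
have /allP /(_ i (mem_iota_ord i)) := hc.
rewrite card_iota => /eqP ne e; apply: ne; rewrite -e.
apply: eq_in_count => j; rewrite mem_iota add0n => /= jn.
by rewrite in_set mxtE natF_eq0 !inordK.
Qed.

Lemma redundancy_ok k n r m b Gt Ht Pt (i0 : 'I_k.+1) :
  (m + k.+1 = n.+1)%N -> (m <= r.+1)%N ->
  chk_mul r.+1 n.+1 k.+1 Ht Gt [::] ->
  chk_mul k.+1 n.+1 k.+1 Gt (id_table k.+1) (id_table k.+1) ->
  chk_mul m n.+1 m (take m Ht) Pt (id_table m) ->
  count (fun j => tab Gt i0 j %% p != 0)%N (iota 0 n.+1) = b.+1 ->
  minwt_chk k.+1 n.+1 Gt b.+1 ->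
  stop_chk n.+1 r.+1 Ht b ->
  nostop_chk n.+1 r.+1 Ht Gt i0 ->
  stopping_redundancy_le (mxt k.+1 n.+1 Gt) r.+1.
Proof.
move=> mk mr c1 c2 c3 cnt mw st ns.
exists b.+1, r.+1, (mxt r.+1 n.+1 Ht); split => //.
- apply: (parity_ok (H0 := mxt m n.+1 (take m Ht))
     (Q := (mxt k.+1 n.+1 (id_table k.+1))^T) (P := (mxt m n.+1 Pt)^T) _ _ _ _ mk).
  + by rewrite (mul_table c1) zero_tableE.
  + by rewrite (mul_table c2) id_tableE.
  + by rewrite (mul_table c3) id_tableE.
  + exact: take_sub mr.
- exact: (minwt_ok _ cnt mw).
- split; [exact: stop_ok | exact: (nostop_ok cnt ns)].
Qed.

End Fp.

Lemma prime2 : prime 2. Proof. by []. Qed.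
Lemma prime3 : prime 3. Proof. by []. Qed.

Lemma g24_ok : stopping_redundancy_le golay24_gen 34.
Proof.
apply: (@redundancy_ok 2 prime2 11 23 33 12 7 golay24_table g24_H g24_P (@Ordinal 12 1 isT));
  vm_compute; reflexivity.
Qed.

Lemma g12_ok : stopping_redundancy_le golay12_gen 22.
Proof.
apply: (@redundancy_ok 3 prime3 5 11 21 6 5 golay12_table g12_H g12_P (@Ordinal 6 0 isT));
  vm_compute; reflexivity.
Qed.

Theorem mainTheorem14 :
  stopping_redundancy_le golay24_gen 34 /\ stopping_redundancy_le golay12_gen 22.
Proof. exact: (conj g24_ok g12_ok). Qed.
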